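(* Let $r\ge2$, $a_1,\dots,a_r\in\mathbb{N}$ and $n_1,\dots,n_r\ge1$. In the sampling without replacement Pólya–Eggenberger urn with $r$ types of balls and ball transition matrix $\mathrm{diag}(-a_1,\dots,-a_r)$, started with $a_jn_j$ balls of type $j$, let $\mathbf{Y}_{\mathbf{an}}=(Y^{[1]}_{\mathbf{an}},\dots,Y^{[r-1]}_{\mathbf{an}})$ count the numbers of balls of types $1,\dots,r-1$ when the process stops. Then for $0\le k_j\le n_j$, \[ \mathbb{P}\{\mathbf{Y}_{\mathbf{an}}=(a_1k_1,\dots,a_{r-1}k_{r-1})\}=\sum_{\ell_1=k_1}^{n_1}\cdots\sum_{\ell_{r-1}=k_{r-1}}^{n_{r-1}}\frac{\prod_{j=1}^{r-1}\binom{n_j}{\ell_j}\binom{\ell_j}{k_j}(-1)^{\ell_j-k_j}}{\binom{n_r+\sum_{f=1}^{r-1}\frac{a_f\ell_f}{a_r}}{n_r}}, \] and for all integers $s_1,\dots,s_{r-1}\ge0$, \[ \mathbb{E}\Big(\prod_{j=1}^{r-1}\Big(\frac{Y^{[j]}_{\mathbf{an}}}{a_j}\Big)^{\underline{s_j}}\Big)=\frac{\prod_{j=1}^{r-1}n_j^{\underline{s_j}}}{\binom{n_r+\sum_{f=1}^{r-1}\frac{a_fs_f}{a_r}}{n_r}}. \]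
   Context: The urn: at each step a ball is drawn uniformly at random among all balls present; if it is of type $j$, the number of type $j$ balls decreases by $a_j$. The process stops when either all type $r$ balls have been removed or all balls of types $1,\dots,r-1$ have been removed; $Y^{[j]}_{\mathbf{an}}$ is the number of type $j$ balls at that time. For real $x$ and integer $k\ge0$, $x^{\underline{k}}=x(x-1)\cdots(x-k+1)$ and $\binom{x}{k}=x^{\underline{k}}/k!$. *)

(* Defs.v *)
From HB Require Import structures.
From mathcomp Require Import all_boot all_order all_algebra.
Set Implicit Arguments. Unset Strict Implicit. Unset Printing Implicit Defensive.
Import Order.TTheory GRing.Theory Num.Theory.
Local Open Scope ring_scope.

Definition falling {R : pzRingType} (x : R) (k : nat) : R :=
  \prod_(i < k) (x - i%:R).

Definition gbinom {R : fieldType} (x : R) (k : nat) : R :=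
  falling x k / (k`!)%:R.

(* Urn with r = q+1 types.  Types 1..r-1 are indexed by 'I_q, type r is
   separate.  A state is (x, z): x j = number of balls of type j (j < r),
   z = number of balls of type r.  a j (resp. ar) = number of balls removed
   when a ball of type j (resp. type r) is drawn. *)
Definition urn_stopped (q : nat) (x : {ffun 'I_q -> nat}) (z : nat) : bool :=
  (z == 0%N) || [forall j, x j == 0%N].

(* urn_expect a ar fuel x z f = E[ f(Y) ] where Y is the vector of the
   numbers of balls of types 1..r-1 when the process started from (x,z)
   stops; fuel bounds the number of steps (each step removes >= 1 ball when
   all a j, ar >= 1, so the total number of balls is enough fuel). *)
Fixpoint urn_expect {R : fieldType} (q : nat) (a : {ffun 'I_q -> nat}) (ar : nat)
    (fuel : nat) (x : {ffun 'I_q -> nat}) (z : nat)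
    (f : {ffun 'I_q -> nat} -> R) {struct fuel} : R :=
  if urn_stopped x z then f x else
  match fuel with
  | 0%N => 0
  | fuel'.+1 =>
      let tot : R := (\sum_(i < q) x i + z)%N%:R in
      \sum_(j < q) ((x j)%:R / tot) *
          urn_expect a ar fuel' [ffun i => if i == j then (x i - a i)%N else x i] z f
      + (z%:R / tot) * urn_expect a ar fuel' x (z - ar)%N f
  end.

Definition urn_E {R : fieldType} (q : nat) (a : {ffun 'I_q -> nat}) (ar : nat)
    (n : {ffun 'I_q -> nat}) (nr : nat) (f : {ffun 'I_q -> nat} -> R) : R :=
  urn_expect a ar (\sum_(j < q) a j * n j + ar * nr)%N
    [ffun j => (a j * n j)%N] (ar * nr)%N f.

Definition urn_P {R : fieldType} (q : nat) (a : {ffun 'I_q -> nat}) (ar : nat)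
    (n : {ffun 'I_q -> nat}) (nr : nat) (y : {ffun 'I_q -> nat}) : R :=
  urn_E a ar n nr (fun x => (x == y)%:R).

(* Main.v *)
Require Import Defs.
From HB Require Import structures.
From mathcomp Require Import all_boot all_order all_algebra.
From mathcomp Require Import ring lra zify.
Import Order.TTheory GRing.Theory Num.Theory.
Local Open Scope ring_scope.
Section S.
Variable R : realFieldType.
Lemma fallingSl (x : R) s : falling x s.+1 = x * falling (x - 1) s.
Proof.
rewrite /falling big_ord_recl /= subr0; congr (_ * _); apply: eq_bigr => i _.
rewrite /bump /= add1n -addn1 natrD; ring.
Qed.
Lemma fallingSr (x : R) s : falling x s.+1 = falling x s * (x - s%:R).
Proof. by rewrite /falling big_ord_recr. Qed.
Lemma falling_rec (m s : nat) :
  m%:R * falling ((m.-1)%:R : R) s = (m%:R - s%:R) * falling (m%:R : R) s.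
Proof.
case: m => [|p]; first by rewrite !mul0r; case: s => [|s]; rewrite ?fallingSl ?mul0r ?mulr0 // subr0 mul0r.
have h := fallingSl ((p.+1)%:R : R) s.
have e : (p.+1)%:R - 1 = p%:R :> R by rewrite -natr1 addrK.
by rewrite fallingSr e in h; rewrite /= -h mulrC.
Qed.
Lemma bin_rec (m l : nat) :
  m%:R * ('C(m.-1, l))%:R = (m%:R - l%:R) * ('C(m, l))%:R :> R.
Proof.
rewrite -natrM mul_bin_down; case: (leqP l m) => h; first by rewrite natrM natrB.
by rewrite bin_small // !mulr0 muln0.
Qed.
Definition Gb (c : R) (p : nat) := gbinom (p%:R + c) p.
Lemma Gb0 c : Gb c 0 = 1.
Proof. by rewrite /Gb /gbinom /falling big_ord0 fact0 divr1. Qed.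
Lemma GbS c p : Gb c p.+1 * (p.+1)%:R = ((p.+1)%:R + c) * Gb c p.
Proof.
rewrite /Gb /gbinom fallingSl factS natrM.
have e : (p.+1)%:R + c - 1 = p%:R + c :> R by rewrite -natr1; ring.
rewrite e.
have hA : p.+1%:R != 0 :> R by rewrite pnatr_eq0.
have hB : p`!%:R != 0 :> R by rewrite pnatr_eq0 -lt0n fact_gt0.
set F := falling _ _. set A := (p.+1)%:R in hA *. set B := (p`!)%:R in hB *.
field; apply/andP; split => //; by rewrite addrC natr1 pnatr_eq0.
Qed.
Lemma Gb_gt0 c p : 0 <= c -> 0 < Gb c p.
Proof.
move=> hc; elim: p => [|p IH]; first by rewrite Gb0.
have h := GbS c p.
have hp : 0 < (p.+1)%:R :> R by rewrite ltr0n.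
have -> : Gb c p.+1 = ((p.+1)%:R + c) * Gb c p / (p.+1)%:R.
  by rewrite -h mulrK // unitfE gt_eqF.
apply: divr_gt0 => //; apply: mulr_gt0 => //; exact: ltr_wpDr.
Qed.
Lemma Gb_c0 p : Gb 0 p = 1.
Proof.
elim: p => [|p IH]; first exact: Gb0.
have h := GbS 0 p; rewrite IH addr0 mulr1 in h.
have hp : (p.+1)%:R != 0 :> R by rewrite pnatr_eq0.
by apply: (mulIf hp); rewrite h mul1r.
Qed.

Lemma bin_mul_sub (mm kk t : nat) :
  ('C(mm, t + kk) * 'C(t + kk, kk) = 'C(mm, kk) * 'C(mm - kk, t))%N.
Proof.
case: (leqP (t + kk) mm) => h; last first.
  rewrite (bin_small h) mul0n; case: (leqP kk mm) => hk; last by rewrite (bin_small hk).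
  rewrite (bin_small (n := mm - kk)) ?muln0 //; lia.
have h1 : (kk <= mm)%N by apply: leq_trans h; apply: leq_addl.
have h2 : (t <= mm - kk)%N by rewrite leq_subRL // addnC.
have hpos : (0 < kk`! * t`! * (mm - (t + kk))`!)%N by rewrite !muln_gt0 !fact_gt0.
apply/eqP; rewrite -(eqn_pmul2r hpos); apply/eqP.
have E1 := bin_fact h. have E2 := bin_fact (leq_addl t kk).
have E3 := bin_fact h1. have E4 := bin_fact h2.
rewrite addnK in E2. rewrite -subnDA addnC in E4.
transitivity ('C(mm, t + kk) * ('C(t + kk, kk) * (kk`! * t`!)) * (mm - (t + kk))`!)%N.
  ring.
rewrite E2 -mulnA E1 -E3 -E4; ring.
Qed.

Lemma alt_sum (p : nat) :
  \sum_(i < p.+1) (('C(p, i))%:R * (-1) ^+ i : R) = (p == 0)%N%:R.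
Proof.
have := exprDn (1 : R) (-1) p; rewrite subrr expr0n => ->.
apply: eq_bigr => i _.
by rewrite expr1n mul1r mulr_natl.
Qed.

Lemma binv (M mm kk : nat) : (mm <= M)%N ->
  \sum_(i < M.+1) (('C(mm, i))%:R * ('C(i, kk))%:R * (-1) ^+ (i - kk) : R)
  = (mm == kk)%:R.
Proof.
move=> hm; rewrite -(big_mkord xpredT (fun i => ('C(mm, i))%:R * ('C(i, kk))%:R * (-1) ^+ (i - kk) : R)).
rewrite (big_cat_nat _ (n := mm.+1)) //= [X in _ + X = _]big1_seq ?addr0; last first.
  move=> i /andP [_]; rewrite mem_index_iota => /andP [hi _]; by rewrite (bin_small hi) !mul0r.
case: (ltnP mm kk) => hk.
  rewrite (ltn_eqF hk); apply: big1_seq.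
  move=> i /andP [_]; rewrite mem_index_iota => /andP [_ hi].
  by rewrite (bin_small (n := i)) ?mulr0n ?mulr0 ?mul0r // (leq_trans hi hk).
rewrite (big_cat_nat _ (n := kk)) ?(leqW hk) //= [X in X + _ = _]big1_seq ?add0r; last first.
  move=> i /andP [_]; rewrite mem_index_iota => /andP [_ hi]; by rewrite (bin_small hi) mulr0 mul0r.
rewrite -{1}[kk]add0n big_addn subSn //.
rewrite (eq_bigr (fun t => ('C(mm, kk))%:R * (('C(mm - kk, t))%:R * (-1) ^+ t) : R)); last first.
  by move=> t _; rewrite addnK mulrA -natrM bin_mul_sub natrM.
rewrite -mulr_sumr big_mkord alt_sum subn_eq0.
case: (eqVneq mm kk) => [->|hne]; first by rewrite leqnn binn mulr1.
have -> : (mm <= kk)%N = false by rewrite leqNgt ltn_neqAle eq_sym hne hk.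
by rewrite mulr0.
Qed.
End S.
Arguments Gb {R}.
Arguments fallingSl {R}. Arguments fallingSr {R}. Arguments falling_rec {R}.
Arguments bin_rec {R}. Arguments Gb0 {R}. Arguments GbS {R}. Arguments Gb_gt0 {R}.
Arguments Gb_c0 {R}. Arguments alt_sum {R}. Arguments binv {R}.
Section Urn.
Variables (R : realFieldType) (q : nat) (a : {ffun 'I_q -> nat}) (ar : nat) (n : {ffun 'I_q -> nat}).
Hypotheses (ha : forall j, (1 <= a j)%N) (har : (1 <= ar)%N).

Definition am (m : {ffun 'I_q -> nat}) : {ffun 'I_q -> nat} := [ffun j => (a j * m j)%N].
Definition dec (m : {ffun 'I_q -> nat}) (j : 'I_q) : {ffun 'I_q -> nat} :=
  [ffun i => if i == j then (m i).-1 else m i].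

Lemma stopped_am (m : {ffun 'I_q -> nat}) (mr : nat) : urn_stopped (am m) (ar * mr)%N = (mr == 0%N) || [forall j, m j == 0%N].
Proof.
have har' : (ar == 0%N) = false by apply: negbTE; rewrite -lt0n.
rewrite /urn_stopped muln_eq0 har' /=; congr (_ || _); apply: eq_forallb => j.
by rewrite ffunE muln_eq0 -[a j == 0%N]negbK -lt0n ha.
Qed.

Lemma step_am (m : {ffun 'I_q -> nat}) j : [ffun i => if i == j then (am m i - a i)%N else am m i] = am (dec m j).
Proof.
apply/ffunP => i; rewrite !ffunE; case: eqP => _ //.
by rewrite -subn1 mulnBr muln1.
Qed.

Lemma sum_dec (m : {ffun 'I_q -> nat}) j : (0 < m j)%N -> ((\sum_(i < q) dec m j i).+1 = \sum_(i < q) m i)%N.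
Proof.
move=> h; rewrite (bigD1 j) //= [X in _ = X](bigD1 j) //= ffunE eqxx -addSn prednK //.
congr (_ + _)%N; apply: eq_bigr => i /negbTE hij; by rewrite ffunE hij.
Qed.

Lemma urn_expect_eq (f : {ffun 'I_q -> nat} -> R) (F : {ffun 'I_q -> nat} -> nat -> R) :
  (forall (m : {ffun 'I_q -> nat}) (mr : nat), (forall j, (m j <= n j)%N) -> urn_stopped (am m) (ar * mr)%N -> F m mr = f (am m)) ->
  (forall (m : {ffun 'I_q -> nat}) (mr : nat), (forall j, (m j <= n j)%N) -> ~~ urn_stopped (am m) (ar * mr)%N ->
     F m mr = \sum_(j < q) ((am m j)%:R / (\sum_(i < q) am m i + ar * mr)%N%:R) * F (dec m j) mr
              + ((ar * mr)%N%:R / (\sum_(i < q) am m i + ar * mr)%N%:R) * F m mr.-1) ->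
  forall fuel (m : {ffun 'I_q -> nat}) (mr : nat), (forall j, (m j <= n j)%N) -> (\sum_(j < q) m j + mr <= fuel)%N ->
  urn_expect a ar fuel (am m) (ar * mr)%N f = F m mr.
Proof.
move=> hfun hrec; elim=> [|fuel IH] m mr hmn hs /=.
  move: hs; rewrite leqn0 addn_eq0 => /andP [_ /eqP ->].
  by rewrite stopped_am eqxx /= (hfun m 0%N hmn) // stopped_am eqxx.
case hst: (urn_stopped (am m) (ar * mr)%N); first by rewrite hfun.
rewrite (hrec m mr hmn (negbT hst)).
have hmr : (0 < mr)%N by move: hst; rewrite stopped_am => /norP [h _]; rewrite lt0n.
congr (_ + _).
  apply: eq_bigr => j _; rewrite step_am.
  case: (posnP (m j)) => hmj; first by rewrite /am ffunE hmj muln0 !mul0r.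
  congr (_ * _); apply: IH.
    move=> i; rewrite ffunE; case: eqP => _; last exact: hmn.
    exact: leq_trans (leq_pred _) (hmn i).
  by move: hs; rewrite -(@sum_dec m j hmj) addSn ltnS.
have -> : (ar * mr - ar = ar * mr.-1)%N by rewrite -subn1 mulnBr muln1.
rewrite IH //; lia.
Qed.

Definition cS (s : 'I_q -> nat) : R := \sum_(f < q) (a f * s f)%:R / ar%:R.

Lemma prod_rec (g : 'I_q -> nat -> R) (s : 'I_q -> nat)
  (hg : forall j (mm : nat), mm%:R * g j mm.-1 = (mm%:R - (s j)%:R) * g j mm) (m : {ffun 'I_q -> nat}) (mr : nat) :
  (0 < mr)%N ->
  (\prod_j g j (m j)) / Gb (cS s) mr =
  \sum_(j < q) ((am m j)%:R / (\sum_(i < q) am m i + ar * mr)%N%:R)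
       * ((\prod_i g i (dec m j i)) / Gb (cS s) mr)
  + ((ar * mr)%N%:R / (\sum_(i < q) am m i + ar * mr)%N%:R)
       * ((\prod_i g i (m i)) / Gb (cS s) mr.-1).
Proof.
case: mr => // p _ /=.
set P := \prod_j g j (m j).
set T := ((\sum_(i < q) am m i + ar * p.+1)%N%:R : R).
set G1 := Gb (cS s) p.+1.
have key j : (am m j)%:R * \prod_i g i (dec m j i) = (a j)%:R * ((m j)%:R - (s j)%:R) * P.
  rewrite /P (bigD1 j) //= [X in _ = _ * X](bigD1 j) //= !ffunE eqxx natrM.
  rewrite (eq_bigr (fun i => g i (m i))); last by move=> i /negbTE h; rewrite ffunE h.
  by rewrite -mulrA (mulrA (m j)%:R) hg; ring.
have e2 : forall x y, x / T * (y / G1) = x * y / (T * G1).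
  by move=> x y; rewrite [(T * G1)^-1]invfM mulrACA.
rewrite (eq_bigr (fun j => (a j)%:R * ((m j)%:R - (s j)%:R) * (P / (T * G1)))); last first.
  by move=> j _; rewrite e2 key !mulrA.
rewrite -mulr_suml.
set A := \sum_(j < q) (a j)%:R * (m j)%:R : R.
set S := \sum_(j < q) (a j)%:R * (s j)%:R : R.
have eAS : \sum_(i < q) (a i)%:R * ((m i)%:R - (s i)%:R) = A - S :> R.
  by rewrite /A /S -sumrB; apply: eq_bigr => i _; rewrite mulrBr.
have eT : T = A + ar%:R * (p.+1)%:R.
  rewrite /T natrD natr_sum natrM /A; congr (_ + _); apply: eq_bigr => i _; by rewrite ffunE natrM.
have ec : cS s = S / ar%:R.
  by rewrite /cS /S mulr_suml; apply: eq_bigr => i _; rewrite natrM.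
have hG1 : G1 != 0.
  rewrite /G1 gt_eqF // Gb_gt0 // ec divr_ge0 // sumr_ge0 // => i _; exact: mulr_ge0.
have hS : 0 <= S by rewrite sumr_ge0 // => i _; exact: mulr_ge0.
have hA : 0 <= A by rewrite sumr_ge0 // => i _; exact: mulr_ge0.
have har0 : 0 < ar%:R :> R by rewrite ltr0n.
have hp : 0 < (p.+1)%:R :> R by rewrite ltr0n.
have hT : T != 0 by rewrite eT gt_eqF // ltr_wpDl // mulr_gt0.
have hGp : Gb (cS s) p = G1 * (p.+1)%:R / ((p.+1)%:R + cS s).
  rewrite /G1 GbS [_ * Gb _ p]mulrC mulrK // unitfE gt_eqF // ltr_wpDr // ec divr_ge0 //.
rewrite hGp eAS ec.
have hc : (p.+1)%:R + S / ar%:R != 0 by rewrite gt_eqF // ltr_wpDr // divr_ge0.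
have har1 : ar%:R != 0 :> R by rewrite gt_eqF.
have hp1 : (p.+1)%:R != 0 :> R by rewrite gt_eqF.
rewrite eT in hT *.
rewrite natrM.
move: hc har1 hp1 hG1 hT; set Q := (p.+1)%:R; set ar' := ar%:R => hc har1 hp1 hG1 hT.
field.
have hq1 : (1 + p%:R : R) = (p.+1)%:R by rewrite addrC natr1.
rewrite hq1 hG1.
have hQ : 0 < (p.+1)%:R :> R by [].
by apply/and5P; split => //; rewrite gt_eqF //; nra.
Qed.
Definition term (g : 'I_q -> nat -> R) (s : 'I_q -> nat) (m : {ffun 'I_q -> nat}) (mr : nat) : R :=
  (\prod_(j < q) g j (m j)) / Gb (cS s) mr.

Lemma term_rec (g : 'I_q -> nat -> R) (s : 'I_q -> nat)
  (hg : forall j (mm : nat), mm%:R * g j mm.-1 = (mm%:R - (s j)%:R) * g j mm) (m : {ffun 'I_q -> nat}) (mr : nat) :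
  (0 < mr)%N ->
  term g s m mr =
  \sum_(j < q) ((am m j)%:R / (\sum_(i < q) am m i + ar * mr)%N%:R) * term g s (dec m j) mr
  + ((ar * mr)%N%:R / (\sum_(i < q) am m i + ar * mr)%N%:R) * term g s m mr.-1.
Proof. exact: prod_rec. Qed.
End Urn.

Theorem corollary4 (R : realFieldType) (q : nat) (hq : (1 <= q)%N)
    (a : {ffun 'I_q -> nat}) (ar : nat) (n : {ffun 'I_q -> nat}) (nr : nat)
    (ha : forall j, (1 <= a j)%N) (har : (1 <= ar)%N)
    (hn : forall j, (1 <= n j)%N) (hnr : (1 <= nr)%N) :
  (forall k : {ffun 'I_q -> nat}, (forall j, (k j <= n j)%N) ->
     urn_P (R := R) a ar n nr [ffun j => (a j * k j)%N] =
     \sum_(l : {ffun 'I_q -> 'I_(\max_(j < q) n j).+1}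
             | [forall j, (k j <= l j <= n j)%N])
        (\prod_(j < q) (('C(n j, l j))%:R * ('C(l j, k j))%:R
                          * (-1) ^+ (l j - k j)%N))
        / gbinom (nr%:R + \sum_(f < q) (a f * l f)%:R / ar%:R) nr)
  /\
  (forall s : {ffun 'I_q -> nat},
     urn_E a ar n nr
       (fun x => \prod_(j < q) falling ((x j)%:R / (a j)%:R : R) (s j)) =
     (\prod_(j < q) falling ((n j)%:R : R) (s j))
       / gbinom (nr%:R + \sum_(f < q) (a f * s f)%:R / ar%:R) nr).
Proof.
have hfuel : (\sum_(j < q) n j + nr <= \sum_(j < q) a j * n j + ar * nr)%N.
  apply: leq_add; last exact: leq_pmull.
  by apply: leq_sum => j _; exact: leq_pmull.
have hnn : forall j, (n j <= n j)%N by [].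
split.
- move=> k hk.
  set M := (\max_(j < q) n j).
  pose F := fun (m : {ffun 'I_q -> nat}) (mr : nat) =>
    \sum_(l : {ffun 'I_q -> 'I_M.+1} | [forall j, (k j <= l j <= n j)%N])
      term R q a ar (fun j i => ('C(i, l j))%:R * ('C(l j, k j))%:R * (-1) ^+ (l j - k j)%N)
        (fun j => nat_of_ord (l j)) m mr.
  transitivity (F n nr); last by [].
  rewrite /urn_P /urn_E.
  change (urn_expect a ar (\sum_(j < q) a j * n j + ar * nr)%N (am q a n) (ar * nr)%N
     (fun x => (x == am q a k)%:R) = F n nr).
  apply: (@urn_expect_eq R q a ar n ha har _ F _ _ _ n nr hnn hfuel).
  + move=> m mr hmn hst /=.
    have e1 : (am q a m == am q a k) = (m == k).
      apply/eqP/eqP => [h|-> //]; apply/ffunP => j.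
      have := congr1 (fun f : {ffun 'I_q -> nat} => f j) h; rewrite /am !ffunE => /eqP.
      by rewrite eqn_pmul2l // => /eqP.
    rewrite e1 /F.
    have hterm : forall l : {ffun 'I_q -> 'I_M.+1},
      term R q a ar (fun j i => ('C(i, l j))%:R * ('C(l j, k j))%:R * (-1) ^+ (l j - k j)%N)
        (fun j => nat_of_ord (l j)) m mr =
      \prod_(j < q) (('C(m j, l j))%:R * ('C(l j, k j))%:R * (-1) ^+ (l j - k j)%N).
      move=> l; rewrite /term /=.
      move: hst; rewrite stopped_am // => /orP [/eqP -> | /forallP h0]; first by rewrite Gb0 divr1.
      case: (boolP [forall j, (l j : nat) == 0%N]) => [/forallP hl0 | /forallPn [j hj]].
        have -> : cS R q a ar (fun j => nat_of_ord (l j)) = 0.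
          by rewrite /cS big1 // => j _; rewrite (eqP (hl0 j)) muln0 mulr0n mul0r.
        by rewrite Gb_c0 divr1.
      by rewrite (bigD1 j) //= (eqP (h0 j)) bin0n (negbTE hj) /= mulr0n !mul0r.
    rewrite (eq_bigr _ (fun l _ => hterm l)) big_mkcond /=.
    rewrite (eq_bigr (fun l : {ffun 'I_q -> 'I_M.+1} =>
        \prod_(j < q) (('C(m j, l j))%:R * ('C(l j, k j))%:R * (-1) ^+ (l j - k j)%N) : R)); last first.
      move=> l _; case: ifP => // /forallPn [j]; rewrite negb_and -!ltnNge => /orP [h | h].
        by rewrite (bigD1 j) //= (bin_small h) mulr0n mulr0 !mul0r.
      by rewrite (bigD1 j) //= (bin_small (leq_ltn_trans (hmn j) h)) mulr0n !mul0r.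
    rewrite -(bigA_distr_bigA (fun j (i : 'I_M.+1) => ('C(m j, i))%:R * ('C(i, k j))%:R * (-1) ^+ (i - k j)%N : R)) /=.
    rewrite (eq_bigr (fun j => ((m j == k j)%:R : R))); last first.
      move=> j _; apply: binv; apply: leq_trans (hmn j) _; rewrite /M; first [exact: leq_bigmax | exact: le_bigmax | by apply: (leq_bigmax_cond (P := xpredT)) | apply/bigmax_geP; right; exists j].
    case: (eqVneq m k) => [->|hne].
      by rewrite big1 // => j _; rewrite eqxx.
    have [j hj] : exists j, m j != k j.
      apply/existsP; apply: contraR hne => /existsPn h; apply/eqP/ffunP => j.
      by apply/eqP; move: (h j); rewrite negbK.
    by rewrite (bigD1 j) //= (negbTE hj) mulr0n mul0r.
  + move=> m mr hmn hst.
    have hmr : (0 < mr)%N by move: hst; rewrite stopped_am // => /norP [h _]; rewrite lt0n.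
    rewrite /F (eq_bigr _ (fun l _ => @term_rec R q a ar har _ _ _ m mr hmr)); last first.
      by move=> l _ j mm /=; rewrite !mulrA bin_rec.
    rewrite big_split /=; congr (_ + _); last by rewrite mulr_sumr.
    by rewrite exchange_big; apply: eq_bigr => j _; rewrite mulr_sumr.
- move=> s.
  pose F := term R q a ar (fun j i => falling (i%:R : R) (s j)) (fun j => s j).
  transitivity (F n nr); last by [].
  rewrite /urn_E.
  change (urn_expect a ar (\sum_(j < q) a j * n j + ar * nr)%N (am q a n) (ar * nr)%N
     (fun x => \prod_(j < q) falling ((x j)%:R / (a j)%:R : R) (s j)) = F n nr).
  apply: (@urn_expect_eq R q a ar n ha har _ F _ _ _ n nr hnn hfuel).
  + move=> m mr hmn hst /=.
    have ef : \prod_(j < q) falling ((am q a m j)%:R / (a j)%:R : R) (s j) =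
              \prod_(j < q) falling ((m j)%:R : R) (s j).
      apply: eq_bigr => j _; have ha0 : (a j)%:R != 0 :> R by rewrite pnatr_eq0 -lt0n ha.
      by rewrite ffunE natrM mulrAC mulfV // mul1r.
    rewrite ef /F /term.
    move: hst; rewrite stopped_am // => /orP [/eqP -> | /forallP h0]; first by rewrite Gb0 divr1.
    case: (boolP [forall j, s j == 0%N]) => [/forallP hs0 | /forallPn [j hj]].
      have -> : cS R q a ar (fun j => s j) = 0.
        by rewrite /cS big1 // => j _; rewrite (eqP (hs0 j)) muln0 mulr0n mul0r.
      by rewrite Gb_c0 divr1.
    rewrite (bigD1 j) //= (eqP (h0 j)).
    have -> : falling ((0%N)%:R : R) (s j) = 0.
      by case: (s j) hj => // t _; rewrite fallingSl mulr0n mul0r.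
    by rewrite !mul0r.
  + move=> m mr hmn hst.
    have hmr : (0 < mr)%N by move: hst; rewrite stopped_am // => /norP [h _]; rewrite lt0n.
    rewrite /F term_rec //.
    by move=> j mm; exact: falling_rec.
Qed.
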